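(* Let $G$ be a finite non-abelian group whose order is divisible by exactly three distinct primes. Then $G$ is exponent-critical if and only if $G$ is the direct product of a cyclic Sylow subgroup of $G$ and its complement, where this complement is a minimal non-abelian group (i.e. a non-abelian group all of whose proper subgroups are abelian).
   Context: A finite group $G$ is called exponent-critical if the exponent $\exp(G)$ of $G$ is not equal to the least common multiple of the exponents of the proper non-abelian subgroups of $G$. *)

(* Defs.v *)
From mathcomp Require Import all_boot all_fingroup all_solvable.
Set Implicit Arguments. Unset Strict Implicit. Unset Printing Implicit Defensive.
Local Open Scope group_scope.

Definition lcm_exp_proper_nonabelian (gT : finGroupType) (G : {group gT}) : nat :=
  \big[lcmn/1%N]_(H : {group gT} | (H \proper G) && ~~ abelian H) exponent H.

Definition exponent_critical (gT : finGroupType) (G : {group gT}) : Prop :=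
  exponent G <> lcm_exp_proper_nonabelian G.

Definition minimal_nonabelian (gT : finGroupType) (K : {group gT}) : Prop :=
  ~~ abelian K /\ forall H : {group gT}, H \proper K -> abelian H.

(* Main.v *)
Require Import Defs.
From mathcomp Require Import all_boot all_fingroup all_solvable ssralg.
Set Implicit Arguments. Unset Strict Implicit. Unset Printing Implicit Defensive.
Local Open Scope group_scope.


Lemma fusion_ab (gT : finGroupType) (G P : {group gT}) p a y :
  p.-Sylow(G) P -> abelian P -> 'N_G(P) \subset 'C(P) ->
  a \in P -> y \in G -> a ^ y \in P -> a ^ y = a.
Proof.
move=> sylP abP nc Pa Gy Pb; set b := a ^ y in Pb *.
have sPG := pHall_sub sylP.
pose C := 'C_G[b].
have sCG : C \subset G by apply: subsetIl.
have sPC : P \subset C.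
  by rewrite subsetI sPG sub_cent1 (subsetP abP).
have sPyC : P :^ y \subset C.
  rewrite subsetI -{1}(conjGid Gy) conjSg sPG /=.
  by rewrite /b cent1J conjSg sub_cent1 (subsetP abP).
have sylPC : p.-Sylow(C) P := pHall_subl sPC sCG sylP.
have sylPyC : p.-Sylow(C) (P :^ y)%G.
  by apply: pHall_subl sPyC sCG _; rewrite pHallJ.
have [c Cc defPy] := Sylow_trans sylPC sylPyC.
have Nn : y * c^-1 \in 'N_G(P).
  rewrite inE groupM ?groupV ?Gy ?(subsetP sCG _ Cc) //=.
  by apply/normP; rewrite conjsgM /= defPy -conjsgM mulgV conjsg1.
have /centP cn := subsetP nc _ Nn.
have : a ^ (y * c^-1) = a by rewrite /conjg -(cn a Pa) mulKg.
rewrite conjgM -/b => <-.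
have Cc' : c^-1 \in 'C[b] by rewrite groupV; case/setIP: Cc.
by rewrite /conjg -(cent1P Cc') mulKg.
Qed.


Lemma burnside_ncomp (gT : finGroupType) (G P : {group gT}) p :
  p.-Sylow(G) P -> abelian P -> 'N_G(P) \subset 'C(P) ->
  exists K : {group gT}, K <| G /\ p^'.-Hall(G) K.
Proof.
move=> sylP abP nc; have sPG := pHall_sub sylP.
have PidP : idm P @* P = P := morphim_idm (subxx P).
have abA : abelian (idm P @* P) by rewrite PidP.
pose tau := transfer_morphism G abA.
have tauP g : g \in P -> tau g = FiniteModule.fmod abA (g ^+ #|G : P|).
  move=> Pg; have Gg := subsetP sPG g Pg.
  have trX := transversalP (rcosets_cycle_partition sPG Gg).
  rewrite /= (transfer_cycle_expansion sPG abA Gg trX).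
  rewrite -(sum_index_rcosets_cycle sPG Gg trX).
  rewrite FiniteModule.fmodX; last by rewrite /= PidP.
  rewrite (big_morph _ (GRing.mulrnDr _) (GRing.mulr0n _)).
  apply: eq_bigr => x Xx /=.
  have Gx : x \in G by apply: (subsetP (transversal_sub trX)).
  set n := #|_ : _|.
  have Pgn : g ^+ n \in P by rewrite groupX.
  rewrite (fusion_ab sylP abP nc Pgn) ?groupV //.
    by rewrite /restrm /= FiniteModule.fmodX // /= PidP.
  have := mulg_exp_card_rcosets P g x; rewrite -/n mem_rcoset.
  by rewrite /conjg invgK mulgA.
have sKG : 'ker tau \subset G by apply: subsetIl.
exists ('ker tau)%G; split; first exact: ker_normal.
have tiKP : 'ker_P tau = 1.
  apply/trivgP/subsetP => g /setIP[Pg Kg]; apply/set1P.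
  have := mker Kg; rewrite tauP // => /(congr1 val).
  rewrite FiniteModule.fmodK; last by rewrite /= PidP groupX.
  move/eqP; rewrite -order_dvdn => dvd_m.
  have cop : coprime #|G : P| #|P|.
    by case/and3P: sylP => _ pP p'i; rewrite (p'nat_coprime (pi:=p)).
  apply/eqP; rewrite -order_eq1 -dvdn1 -(eqnP cop) dvdn_gcd dvd_m.
  exact: order_dvdG.
have cardP : #|tau @* P| = #|P|.
  by rewrite card_morphim (setIidPr sPG) -indexgI tiKP indexg1.
have cardG : #|tau @* G| = #|P|.
  apply/eqP; rewrite eqn_leq; apply/andP; split; last first.
    by rewrite -{1}cardP subset_leq_card ?morphimS.
  apply: leq_trans (max_card _) _.
  rewrite -(card_imset _ val_inj); apply: (@leq_trans #|idm P @* P|).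
    apply: subset_leq_card.
    by apply/subsetP => _ /imsetP[u _ ->]; apply: FiniteModule.fmodP.
  by rewrite PidP.
have iK : #|G : 'ker tau| = #|P| by rewrite -cardG card_morphim setIid.
rewrite pHallE sKG /=; apply/eqP.
have := Lagrange sKG; rewrite iK (card_Hall sylP) => eq1.
have := partnC p (cardG_gt0 G); rewrite -{3}eq1 mulnC => /eqP.
by rewrite eqn_pmul2r ?part_gt0 // => /eqP.
Qed.


Lemma lcm_ppow (I : finType) (P : pred I) (F : I -> nat) p k :
  prime p -> 0 < k -> (forall i, P i -> 0 < F i) ->
  p ^ k %| \big[lcmn/1%N]_(i | P i) F i -> exists2 i, P i & p ^ k %| F i.
Proof.
move=> pp k0 Fpos.
pose K a := 0 < a /\ (p ^ k %| a -> exists2 i, P i & p ^ k %| F i).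
have : K (\big[lcmn/1%N]_(i | P i) F i).
  apply: big_rec => [|i a Pi [a0 IH]]; rewrite /K.
    split => //; rewrite dvdn1 => /eqP pk1.
    have : 1 < p ^ k by rewrite -(expn0 p) ltn_exp2l // prime_gt1.
    by rewrite pk1.
  split; first by rewrite lcmn_gt0 Fpos.
  rewrite !pfactor_dvdn ?lcmn_gt0 ?Fpos ?a0 // logn_lcm ?Fpos // leq_max.
  case/orP => h; first by exists i => //; rewrite pfactor_dvdn ?Fpos.
  by apply: IH; rewrite pfactor_dvdn.
by case=> _; apply.
Qed.

Section S.
Variable gT : finGroupType.
Implicit Types G H P K L Q R S : {group gT}.

Lemma full_sylows G H : H \subset G ->
  (forall s, s \in primes #|G| -> exists2 S : {group gT}, s.-Sylow(G) S & S \subset H) ->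
  H :=: G.
Proof.
move=> sHG hS; apply/eqP; rewrite eqEcard sHG /=; apply: dvdn_leq => //.
apply/(dvdn_partP _ (cardG_gt0 G)) => s /hS[S sylS sSH].
by rewrite -(card_Hall sylS) cardSg.
Qed.

Lemma proper_pi G H (pi : nat_pred) r : H \subset G -> pi.-group H ->
  r \in primes #|G| -> r \notin pi -> H \proper G.
Proof.
move=> sHG piH rG rpi; case: (eqVproper sHG) => // eqHG.
rewrite mem_primes in rG; case/and3P: rG => pr _ d.
by move: (pgroupP piH r pr); rewrite eqHG => /(_ d); rewrite (negbTE rpi).
Qed.

Lemma cent_helper G P S x (pi : nat_pred) r :
  (forall H : {group gT}, H \proper G -> x \in H -> abelian H) ->
  x \in P -> P \subset G -> S \subset G -> pi.-group P -> pi.-group S ->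
  r \in primes #|G| -> r \notin pi -> (S \subset 'N(P)) || (P \subset 'N(S)) ->
  S \subset 'C(P).
Proof.
move=> hyp Px sPG sSG piP piS rG rpi nPS.
have defJ : P <*> S = P * S.
  by case/orP: nPS => h; [rewrite norm_joinEr | rewrite norm_joinEl].
have prJ : (P <*> S)%G \proper G.
  apply: (proper_pi (pi := pi) (r := r)) => //=; first by rewrite join_subG sPG.
  by rewrite defJ pgroupM piP.
have abJ := hyp _ prJ (subsetP (joing_subl P S) x Px).
apply: subset_trans (joing_subr P S) _.
exact: subset_trans abJ (centS (joing_subl P S)).
Qed.

End S.

Section T.
Variable gT : finGroupType.

Lemma three_primes (G : {group gT}) p : size (primes #|G|) = 3 -> p \in primes #|G| ->
  exists q r, [/\ q \in primes #|G|, r \in primes #|G|, [/\ q != p, r != p & q != r]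
     & forall s, s \in primes #|G| -> [|| s == p, s == q | s == r]].
Proof.
move=> sz pG; have U := primes_uniq #|G|.
move: sz pG U; case: (primes #|G|) => [|a [|b [|c [|d l]]]] //= _.
rewrite !inE !andbT => pabc /andP[/norP[ab ac] bc].
case/or3P: pabc => /eqP ->.
- exists b, c; split; rewrite ?inE ?eqxx ?orbT //; try by split; rewrite // eq_sym.
  by move=> s; rewrite !inE => /or3P[]/eqP->; rewrite eqxx ?orbT.
- exists a, c; split; rewrite ?inE ?eqxx ?orbT //; try by split; rewrite // eq_sym.
  by move=> s; rewrite !inE => /or3P[]/eqP->; rewrite eqxx ?orbT.
- exists a, b; split; rewrite ?inE ?eqxx ?orbT //; try by split; rewrite // eq_sym.
  by move=> s; rewrite !inE => /or3P[]/eqP->; rewrite eqxx ?orbT.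
Qed.

End T.

Section U.
Variable gT : finGroupType.

Lemma struct_lemma (G P : {group gT}) p x :
  ~~ abelian G -> size (primes #|G|) = 3 -> p \in primes #|G| ->
  p.-Sylow(G) P -> x \in P ->
  (forall H : {group gT}, H \proper G -> x \in H -> abelian H) ->
  exists K : {group gT}, [/\ cyclic P, P \x K = G & minimal_nonabelian K].
Proof.
move=> nabG sz pG sylP Px hyp.
have sPG := pHall_sub sylP; have pP := pHall_pgroup sylP.
have [q [r [qG rG [qp rp qr] allpr]]] := three_primes sz pG.
pose pq : nat_pred := [pred s | (s == p) || (s == q)].
pose pr : nat_pred := [pred s | (s == p) || (s == r)].
have pqP : pq.-group P by apply: sub_pgroup pP => s; rewrite !inE => ->.
have prP : pr.-group P by apply: sub_pgroup pP => s; rewrite !inE => ->.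
have rpq : r \notin pq by rewrite !inE negb_or rp eq_sym qr.
have qpr : q \notin pr by rewrite !inE negb_or qp qr.
have abP : abelian P.
  apply: hyp Px; apply: (proper_pi (pi := pq) (r := r)) => //.
have cPG : G \subset 'C(P).
  case: (eqVproper (subsetIl G 'N(P))) => [eqN | prN].
    have nPG : G \subset 'N(P) by rewrite -eqN subsetIr.
    have [Q sylQ] := Sylow_exists q G; have [R sylR] := Sylow_exists r G.
    have sQG := pHall_sub sylQ; have sRG := pHall_sub sylR.
    have cQ : Q \subset 'C(P).
      apply: (cent_helper (pi := pq) (r := r) hyp) => //.
        by apply: sub_pgroup (pHall_pgroup sylQ) => s; rewrite !inE => ->; rewrite orbT.
      by rewrite (subset_trans sQG nPG).
    have cR : R \subset 'C(P).
      apply: (cent_helper (pi := pr) (r := q) hyp) => //.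
        by apply: sub_pgroup (pHall_pgroup sylR) => s; rewrite !inE => ->; rewrite orbT.
      by rewrite (subset_trans sRG nPG).
    have eqC : 'C_G(P) = G.
      apply: full_sylows; first exact: subsetIl.
      move=> s /allpr /or3P[] /eqP->.
      - by exists P => //; rewrite subsetI sPG.
      - by exists Q => //; rewrite subsetI sQG.
      - by exists R => //; rewrite subsetI sRG.
    by rewrite -eqC subsetIr.
  exfalso.
  have sPN : P \subset 'N_G(P) by rewrite subsetI sPG normG.
  have abN := hyp _ prN (subsetP sPN x Px).
  have nc : 'N_G(P) \subset 'C(P) := subset_trans abN (centS sPN).
  have [K [nKG hallK]] := burnside_ncomp sylP abP nc.
  have sKG := normal_sub nKG.
  have nKP : P \subset 'N(K) := subset_trans sPG (normal_norm nKG).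
  have coKP : coprime #|K| #|P|.
    exact: (p'nat_coprime (pi := p) (pHall_pgroup hallK) pP).
  have solP := pgroup_sol pP.
  have [Q sylQK nQP] := sol_coprime_Sylow_exists q solP nKP coKP.
  have [R sylRK nRP] := sol_coprime_Sylow_exists r solP nKP coKP.
  have sylQ : q.-Sylow(G) Q by apply: subHall_Sylow hallK _ sylQK; rewrite !inE.
  have sylR : r.-Sylow(G) R by apply: subHall_Sylow hallK _ sylRK; rewrite !inE.
  have sQG := pHall_sub sylQ; have sRG := pHall_sub sylR.
  have cQ : Q \subset 'C(P).
    apply: (cent_helper (pi := pq) (r := r) hyp) => //.
      by apply: sub_pgroup (pHall_pgroup sylQ) => s; rewrite !inE => ->; rewrite orbT.
    by rewrite nQP orbT.
  have cR : R \subset 'C(P).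
    apply: (cent_helper (pi := pr) (r := q) hyp) => //.
      by apply: sub_pgroup (pHall_pgroup sylR) => s; rewrite !inE => ->; rewrite orbT.
    by rewrite nRP orbT.
  have eqN : 'N_G(P) = G.
    apply: full_sylows; first exact: subsetIl.
    move=> s /allpr /or3P[] /eqP->.
    - by exists P.
    - by exists Q => //; rewrite subsetI sQG cents_norm.
    - by exists R => //; rewrite subsetI sRG cents_norm.
  by move: prN; rewrite eqN properE subxx andbF.
have nPG : P <| G by rewrite /normal sPG cents_norm // centsC.
have /splitsP[K /complP[tiPK defPK]] := SchurZassenhaus_split (pHall_Hall sylP) nPG.
have sKG : K \subset G by rewrite -defPK mulG_subr.
have cKP : K \subset 'C(P) := subset_trans sKG cPG.
have defG : P \x K = G by rewrite dprodE.
have cardG : #|G| = (#|P| * #|K|)%N by rewrite (dprod_card defG).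
have abG_of : abelian K -> abelian G.
  by move=> abK; rewrite -defPK abelianM abP abK.
have cxK : <[x]> \subset 'C(K).
  by rewrite centsC (subset_trans cKP) // centS // cycle_subG.
have eqPx : <[x]> = P.
  have sxP : <[x]> \subset P by rewrite cycle_subG.
  case: (eqVproper sxP) => // prx; exfalso.
  have defJ : K <*> <[x]> = K * <[x]> by rewrite norm_joinEr // cents_norm.
  have prJ : (K <*> <[x]>)%G \proper G.
    rewrite properEcard join_subG sKG (subset_trans sxP sPG) /= defJ.
    rewrite TI_cardMg; last first.
      by apply/trivgP; rewrite -tiPK setIC setIS.
    by rewrite cardG mulnC ltn_pmul2r ?cardG_gt0 // proper_card.
  have abJ := hyp _ prJ (subsetP (joing_subr K <[x]>) x (cycle_id x)).
  by move/negP: nabG; apply; apply: abG_of; apply: abelianS abJ; apply: joing_subl.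
exists K; split => //; first by rewrite -eqPx cycle_cyclic.
split; first by apply: contra nabG; apply: abG_of.
move=> L prL.
have sLK := proper_sub prL.
have defJ : L <*> P = L * P.
  by rewrite norm_joinEr // cents_norm // centsC (subset_trans sLK cKP).
have prJ : (L <*> P)%G \proper G.
  rewrite properEcard join_subG (subset_trans sLK sKG) sPG /= defJ.
  apply: (@leq_ltn_trans (#|L| * #|P|)).
    by rewrite mul_cardG leq_pmulr ?cardG_gt0.
  by rewrite cardG [(#|P| * _)%N]mulnC ltn_pmul2r ?cardG_gt0 // proper_card.
have abJ := hyp _ prJ (subsetP (joing_subr L P) x Px).
by apply: abelianS abJ; apply: joing_subl.
Qed.

End U.

Section V.
Variable gT : finGroupType.

Lemma crit_of_struct (G P K : {group gT}) p :
  p \in primes #|G| -> p.-Sylow(G) P -> cyclic P -> P \x K = G ->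
  minimal_nonabelian K -> exponent_critical G.
Proof.
move=> pG sylP cycP defG [nabK minK] eqL.
have pp : prime p by move: pG; rewrite mem_primes => /andP[].
have sPG := pHall_sub sylP; have pP := pHall_pgroup sylP.
have [_ defPK cKP tiPK] := dprodP defG.
have nPG : P <| G by case/dprod_normal2: defG.
set k := logn p #|P|.
have cardP : #|P| = (p ^ k)%N := card_pgroup pP.
have k0 : 0 < k by rewrite /k (card_Hall sylP) logn_part logn_gt0.
have dP : (p ^ k %| exponent G)%N.
  by rewrite -cardP -(exponent_cyclic cycP) exponentS.
rewrite eqL /lcm_exp_proper_nonabelian in dP.
have [H /andP[prH nabH] dH] := lcm_ppow pp k0 (fun H _ => exponent_gt0 H) dP.
have [y Hy dy] := lcm_ppow pp k0 (fun y _ => order_gt0 y) dH.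
have [m defy] : exists m, #[y] = (m * p ^ k)%N.
  by exists (#[y] %/ p ^ k); rewrite divnK.
have m0 : 0 < m by move: (order_gt0 y); rewrite defy muln_gt0 => /andP[].
set z := y ^+ m.
have oz : #[z] = (p ^ k)%N by rewrite /z orderXdiv defy ?dvdn_mulr // mulKn.
have Hz : z \in H by rewrite groupX.
have sHG := proper_sub prH.
have Pz : z \in P.
  by rewrite (mem_normal_Hall sylP nPG) ?(subsetP sHG) // /p_elt oz pnatX pnat_id.
have eqzP : <[z]> = P.
  apply/eqP; rewrite eqEcard cycle_subG Pz /= cardP -oz //.
have sPH : P \subset H by rewrite -eqzP cycle_subG.
have defH : P * (K :&: H) = H by rewrite group_modl // defPK (setIidPr sHG).
have prKH : (K :&: H)%G \proper K.
  rewrite properE subsetIl /=; apply/negP => sKH.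
  have sKH' : K \subset H := subset_trans sKH (subsetIr K H).
  by move: prH; rewrite properE -defPK mul_subG ?andbF.
have abKH := minK _ prKH.
move/negP: nabH; apply; rewrite -defH abelianM cyclic_abelian //= abKH.
by rewrite (subset_trans (subsetIl K H)) // centsC.
Qed.

End V.

Section W.
Variable gT : finGroupType.

Lemma exists_crit_prime (G : {group gT}) : exponent_critical G ->
  exists p, exists P : {group gT}, exists x,
   [/\ p \in primes #|G|, p.-Sylow(G) P, x \in P
     & forall H : {group gT}, H \proper G -> x \in H -> abelian H].
Proof.
rewrite /exponent_critical; set L := lcm_exp_proper_nonabelian G => crit.
have LdE : (L %| exponent G)%N.
  apply/dvdn_biglcmP => H /andP[prH _]; exact: exponentS (proper_sub prH).
have [p pE nd] : exists2 p, p \in primes (exponent G) & ~~ ((exponent G)`_p %| L)%N.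
  case: (boolP (has (fun p : nat => ~~ ((exponent G)`_p %| L)%N) (primes (exponent G)))).
    by case/hasP => p pE nd; exists p.
  move/hasPn => allp; exfalso; apply: crit; apply/eqP; rewrite eqn_dvd LdE andbT.
  apply/(dvdn_partP _ (exponent_gt0 G)) => p pE.
  by move: (allp p pE); rewrite negbK.
have pG : p \in primes #|G| by rewrite -primes_exponent.
have [P sylP] := Sylow_exists p G.
have eP := exponent_Hall sylP.
have [x Px ex] := exponent_witness (pgroup_nil (pHall_pgroup sylP)).
exists p, P, x; split => // H prH Hx.
apply/negPn/negP => nabH; move/negP: nd; apply.
rewrite -eP ex; apply: dvdn_trans (dvdn_exponent Hx) _.
by apply: biglcmn_sup (dvdnn _); rewrite prH.
Qed.

End W.

Unset Implicit Arguments.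
Set Strict Implicit.

Theorem theoremB (gT : finGroupType) (G : {group gT}) :
  ~~ abelian G -> size (primes #|G|) = 3 ->
  (exponent_critical G <->
   exists p : nat, exists P K : {group gT},
     [/\ p \in primes #|G|, p.-Sylow(G) P, cyclic P,
         P \x K = G & minimal_nonabelian K]).
Proof.
move=> nabG sz; split.
  case/exists_crit_prime => p [P [x [pG sylP Px hyp]]].
  have [K [cycP defG minK]] := struct_lemma nabG sz pG sylP Px hyp.
  by exists p, P, K.
case=> p [P [K [pG sylP cycP defG minK]]].
exact: crit_of_struct pG sylP cycP defG minK.
Qed.
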